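(* Let $p$ be an odd prime such that $3\mid p-1$ and $p\nmid 2^{(p-1)/3}-1$. Then there do not exist integers $r$ with $0<r<p-1$ and positive integers $e$ with $\gcd(e,3)=1$ and $\gcd\big(r,\tfrac{p-1}{3}\big)=1$ such that $x^r\big(x^{e(p-1)/3}+1\big)$ is a permutation polynomial of $\mathbb{F}_p$.
   Context: A permutation polynomial of $\mathbb{F}_p$ is a polynomial inducing a bijection $\mathbb{F}_p\to\mathbb{F}_p$. *)

(* Defs.v *)
From HB Require Import structures.
From mathcomp Require Import all_boot all_order all_algebra.
Set Implicit Arguments. Unset Strict Implicit. Unset Printing Implicit Defensive.
Import GRing.Theory.
Local Open Scope ring_scope.

Definition is_perm_poly (F : finFieldType) (f : {poly F}) : Prop :=
  bijective (fun x : F => f.[x]).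

(* Main.v *)
Require Import Defs.
From HB Require Import structures.
From mathcomp Require Import all_boot all_order all_algebra.
From mathcomp Require Import all_field zify ring.
Import GRing.Theory.
Local Open Scope ring_scope.

Lemma roots_card (F : finFieldType) (d : nat) (c : F) :
  (0 < d)%N -> (#|[set x : F | x ^+ d == c]| <= d)%N.
Proof.
move=> d0.
pose P : {poly F} := 'X^d - c%:P.
have sP : size P = d.+1.
  rewrite /P size_polyDl ?size_polyXn // size_polyN ltnS.
  by apply: leq_trans (size_polyC_leq1 c) d0.
have nzP : P != 0 by rewrite -size_poly_eq0 sP.
have := max_poly_roots nzP (rs := enum [set x : F | x ^+ d == c]).
rewrite sP ltnS cardE; apply.
  by apply/allP=> x; rewrite mem_enum inE /root /P !hornerE => /eqP ->; rewrite subrr.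
exact: enum_uniq.
Qed.

Lemma collide (F : finFieldType) (d : nat) (f : F -> F) (c' c : F) :
  (0 < d)%N -> #|F| = (3 * d).+1 -> injective f ->
  (forall x, x != 0 -> x ^+ d != c' -> f x ^+ d = c) -> False.
Proof.
move=> d0 cF finj H.
pose S := [set x : F | (x != 0) && (x ^+ d != c')].
have h1 : (#|S| <= d)%N.
  rewrite -(card_in_imset (f := f) (D := S)); last by move=> x y _ _; apply: finj.
  apply: leq_trans (roots_card _ _ c d0); apply: subset_leq_card.
  apply/subsetP=> y /imsetP[x xS ->].
  move: xS; rewrite /S inE => /andP[x0 xc].
  by rewrite inE; apply/eqP; apply: H.
have h2 : [set~ (0:F)] \subset S :|: [set x : F | x ^+ d == c'].
  apply/subsetP=> x; rewrite !inE => x0; rewrite x0 /=.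
  by case: (x ^+ d == c').
have := subset_leq_card h2; rewrite cardsC1 cF /=.
move=> h3; have := leq_trans h3 (leq_card_setU _ _).
move=> h6; have := leq_trans h6 (leq_add h1 (roots_card _ _ c' d0)); lia.
Qed.

Lemma cube_sum (F : fieldType) (w0 : F) :
  w0 ^+ 3 = 1 -> w0 != 1 -> 1 + w0 + w0 ^+ 2 = 0.
Proof.
move=> h3 w01.
have h : (w0 - 1) * (1 + w0 + w0 ^+ 2) = w0 ^+ 3 - 1 by ring.
move: h; rewrite h3 subrr => /eqP; rewrite mulf_eq0 subr_eq0 (negbTE w01) /=.
by move/eqP.
Qed.

Lemma cube_cases (F : fieldType) (w0 y : F) :
  w0 ^+ 3 = 1 -> w0 != 1 -> y ^+ 3 = 1 -> [|| y == 1, y == w0 | y == w0 ^+ 2].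
Proof.
move=> h3 w01 hy.
have s0 := cube_sum _ _ h3 w01.
have h : (y - 1) * (y - w0) * (y - w0 ^+ 2) =
  y ^+ 3 - (1 + w0 + w0 ^+ 2) * y ^+ 2 + w0 * (1 + w0 + w0 ^+ 2) * y - w0 ^+ 3 by ring.
move: h; rewrite s0 hy h3 !(mul0r, mulr0, subr0, addr0) subrr => /eqP.
by rewrite !mulf_eq0 !subr_eq0 orbA.
Qed.

Lemma sq_not1 (F : fieldType) (w : F) : w ^+ 3 = 1 -> w != 1 -> w ^+ 2 != 1.
Proof.
move=> h3 w1; apply/eqP => h2; move/eqP: w1; apply.
by rewrite -h3 exprSr h2 mul1r.
Qed.

Lemma not_one_pow (F : fieldType) (w : F) e :
  w ^+ 3 = 1 -> w != 1 -> coprime e 3 -> w ^+ e != 1.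
Proof.
move=> h3 w1 ce; rewrite -(expr_mod _ h3).
move: ce; rewrite -coprime_modl.
have : (e %% 3 < 3)%N by rewrite ltn_pmod.
case: (e %% 3)%N => [|[|[|n]]] //= _ _.
exact: (sq_not1 _ _ h3 w1).
Qed.

Lemma gval (F : fieldType) (w : F) r e d :
  w ^+ 3 = 1 -> w != 1 -> coprime e 3 -> ~~ odd d ->
  w ^+ r * (w ^+ e + 1) ^+ d = w ^+ ((r + e * (2 * d)) %% 3).
Proof.
move=> h3 w1 ce dev.
set u := w ^+ e.
have u3 : u ^+ 3 = 1 by rewrite /u exprAC h3 expr1n.
have u1 : u != 1 by exact: (not_one_pow _ _ _ h3 w1 ce).
have s0 := cube_sum _ _ u3 u1.
have -> : u + 1 = - u ^+ 2.
  by rewrite -[u + 1]subr0 -s0; ring.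
rewrite exprNn -signr_odd (negbTE dev) expr0 mul1r -exprM /u -exprM.
by rewrite -exprD (expr_mod _ h3).
Qed.

Theorem proposition4p1 (p : nat) :
  prime p -> odd p -> (3 %| p.-1)%N -> ~~ (p %| 2 ^ (p.-1 %/ 3) - 1)%N ->
  ~ (exists (r e : nat),
       [/\ (0 < r < p.-1)%N, (0 < e)%N, coprime e 3, coprime r (p.-1 %/ 3)
         & is_perm_poly ('X^r * ('X^(e * (p.-1 %/ 3)) + 1) : {poly 'F_p})]).
Proof.
move=> pp op d3 n2 [r [e [/andP[r0 rlt] e0 ce cr PP]]].
move: n2 PP; set d := (p.-1 %/ 3)%N => n2 PP.
have pd : p.-1 = (3 * d)%N by rewrite mulnC divnK.
have p1 := prime_gt1 pp.
have d0 : (0 < d)%N by lia.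
have dev : ~~ odd d.
  move: op; rewrite -(prednK (prime_gt0 pp)) pd /= oddM /=.
  by case: (odd d).
have cF : #|'F_p| = (3 * d).+1 by rewrite card_Fp // -pd prednK ?prime_gt0.
have ferm : forall x : 'F_p, x != 0 -> x ^+ (3 * d) = 1.
  move=> x x0; apply: (mulfI x0); rewrite mulr1 -exprS -cF.
  exact: expf_card.
have two0 : (2 : 'F_p) != 0.
  apply/negP; rewrite -(dvdn_pcharf (pchar_Fp pp)) => /dvdn_leq h.
  have : p = 2%N by lia.
  by move=> p2; rewrite p2 in op.
set w0 := (2 : 'F_p) ^+ d.
have w03 : w0 ^+ 3 = 1 by rewrite /w0 -exprM mulnC ferm.
have w01 : w0 != 1.
  apply/negP => /eqP; rewrite /w0 => h; move/negP: n2; apply.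
  rewrite (dvdn_pcharf (pchar_Fp pp)) natrB ?expn_gt0 // natrX h subrr.
  by [].
have finj : injective (fun x : 'F_p => ('X^r * ('X^(e * d) + 1) : {poly 'F_p}).[x]).
  exact: bij_inj.
have fx : forall x : 'F_p, ('X^r * ('X^(e * d) + 1) : {poly 'F_p}).[x] ^+ d
    = (x ^+ d) ^+ r * ((x ^+ d) ^+ e + 1) ^+ d.
  move=> x; rewrite !hornerE exprMn -!exprM; congr (_ ^+ _ * (_ ^+ _ + 1) ^+ _).
    by rewrite mulnC.
  by rewrite mulnC.
have w3 : forall x : 'F_p, x != 0 -> (x ^+ d) ^+ 3 = 1.
  by move=> x x0; rewrite -exprM mulnC ferm.
have gen : forall x : 'F_p, x != 0 -> x ^+ d != 1 ->
    ('X^r * ('X^(e * d) + 1) : {poly 'F_p}).[x] ^+ d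
    = (x ^+ d) ^+ ((r + e * (2 * d)) %% 3).
  by move=> x x0 x1; rewrite fx gval // w3.
have at1 : forall x : 'F_p, x ^+ d = 1 ->
    ('X^r * ('X^(e * d) + 1) : {poly 'F_p}).[x] ^+ d = w0.
  by move=> x x1; rewrite fx x1 !expr1n mul1r.
have w02 : w0 ^+ 2 != 1 by apply: sq_not1.
have : ((r + e * (2 * d)) %% 3 < 3)%N by rewrite ltn_pmod.
move: gen; case: ((r + e * (2 * d)) %% 3)%N => [|[|[|n]]] // gen _.
- apply: (collide _ _ _ 1 1 d0 cF finj) => x x0 x1.
  by rewrite gen // expr0.
- apply: (collide _ _ _ (w0 ^+ 2) w0 d0 cF finj) => x x0 x1.
  case/or3P: (cube_cases _ _ _ w03 w01 (w3 x x0)) => /eqP h.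
  + by rewrite at1.
  + rewrite gen //. by rewrite h.
  + by move: x1; rewrite h eqxx.
- apply: (collide _ _ _ w0 w0 d0 cF finj) => x x0 x1.
  case/or3P: (cube_cases _ _ _ w03 w01 (w3 x x0)) => /eqP h.
  + by rewrite at1.
  + by rewrite h eqxx in x1.
  + have hx : x ^+ d = w0 ^+ 2 := h.
    by rewrite gen // hx // -exprM -[(2 * 2)%N]/(3 + 1)%N exprD w03 mul1r expr1.
Qed.
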